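(* For every $d\ge 2$, $\mu(\mathit{BF}(d))\le 2^{d+1}-2$.
   Context: Binary strings $c=c_0\cdots c_{d-1}$ have positions $0,\dots,d-1$ from the left; $c(i)$ is $c$ with bit $i$ complemented. $\mathit{BF}(d)$ has vertex set $\{[\ell,c]:\ell\in\{0,\dots,d\},\ c\in\{0,1\}^d\}$; for $\ell\in\{0,\dots,d-1\}$, $[\ell,c]$ is adjacent to $[\ell+1,c']$ iff $c'=c$ or $c'=c(\ell)$, and there are no other edges. For a connected graph $G$ and $X\subseteq V(G)$, two vertices $x,y$ are $X$-visible if some shortest $x,y$-path has no internal vertex in $X$; $X$ is a mutual-visibility set if every two vertices of $X$ are $X$-visible; $\mu(G)$ is the maximum size of a mutual-visibility set. *)

(* Defs.v *)
From mathcomp Require Import all_boot.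
Set Implicit Arguments. Unset Strict Implicit. Unset Printing Implicit Defensive.

Definition walk (T : finType) (e : rel T) (x y : T) (p : seq T) : Prop :=
  path e x p /\ last x p = y.

Definition shortest_path (T : finType) (e : rel T) (x y : T) (p : seq T) : Prop :=
  walk e x y p /\ forall q, walk e x y q -> size p <= size q.

(* internal vertices of the path x :: p (all vertices but the two ends) *)
Definition internal (T : finType) (x : T) (p : seq T) : seq T := behead (belast x p).

Definition visible (T : finType) (e : rel T) (X : {set T}) (x y : T) : Prop :=
  exists p, shortest_path e x y p /\ all (fun v => v \notin X) (internal x p).

Definition mutual_visibility (T : finType) (e : rel T) (X : {set T}) : Prop :=
  forall x y, x \in X -> y \in X -> visible e X x y.

Definition bf_vertex (d : nat) : finType := ('I_d.+1 * {ffun 'I_d -> bool})%type.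

Definition flip_bit (d : nat) (c : {ffun 'I_d -> bool}) (i : nat) : {ffun 'I_d -> bool} :=
  [ffun j : 'I_d => if val j == i then ~~ c j else c j].

Definition bf_up (d : nat) (u v : bf_vertex d) : bool :=
  ((val u.1).+1 == val v.1) && ((v.2 == u.2) || (v.2 == flip_bit u.2 (val u.1))).

Definition bf_adj (d : nat) : rel (bf_vertex d) := fun u v => bf_up u v || bf_up v u.

(* Main.v *)
Require Import Defs.
From mathcomp Require Import all_boot zify.
From Stdlib Require Import Classical.
Set Implicit Arguments. Unset Strict Implicit. Unset Printing Implicit Defensive.

Ltac slia := simpl in *; lia.



Section BF.
Variable d : nat.
Local Notation V := (bf_vertex d).
Local Notation code := {ffun 'I_d -> bool}.

Definition lev (u : V) : nat := locked (val u.1).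
Lemma levE u : lev u = val u.1. Proof. by rewrite /lev -lock. Qed.
Definition mix (t : nat) (lo hi : code) : code := [ffun i : 'I_d => if i < t then lo i else hi i].
Definition mk (j : nat) (c : code) : V := (inord j, c).

Lemma lev_le (u : V) : lev u <= d.
Proof. by rewrite levE -ltnS ltn_ord. Qed.

Lemma flipE (c : code) k i : flip_bit c k i = if val i == k then ~~ c i else c i.
Proof. by rewrite /flip_bit ffunE. Qed.

Lemma mixE t lo hi i : mix t lo hi i = if i < t then lo i else hi i.
Proof. by rewrite /mix ffunE. Qed.

Lemma lev_mk j c : j <= d -> lev (mk j c) = j.
Proof. by move=> h; rewrite levE /mk /= inordK. Qed.

Lemma adj_sym : symmetric (@bf_adj d).
Proof. by move=> u v; rewrite /bf_adj orbC. Qed.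

Lemma adj_cases (u x : V) : bf_adj u x ->
  (lev x = (lev u).+1 /\ forall i : 'I_d, val i != lev u -> x.2 i = u.2 i) \/
  (lev u = (lev x).+1 /\ forall i : 'I_d, val i != lev x -> x.2 i = u.2 i).
Proof.
rewrite /bf_adj /bf_up => /orP [/andP [/eqP h1 h2] | /andP [/eqP h1 h2]].
- left; split; first by rewrite !levE -h1.
  move=> i hi; case/orP: h2 => /eqP ->; rewrite ?flipE //.
  by rewrite levE in hi; rewrite (negbTE hi).
- right; split; first by rewrite !levE -h1.
  move=> i hi; case/orP: h2 => /eqP ->; rewrite ?flipE //.
  by rewrite levE in hi; rewrite (negbTE hi).
Qed.

Lemma lipschitz (u : V) p : path (@bf_adj d) u p ->
  lev (last u p) <= lev u + size p /\ lev u <= lev (last u p) + size p.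
Proof.
elim: p u => [|x p IH] u /=; first by rewrite !addn0.
move=> /andP [hux hp]; have [h1 h2] := IH _ hp.
case: (adj_cases hux) => [[e _]|[e _]]; clear hux IH hp; split; simpl in *; slia.


Qed.

Lemma ml_up (u : V) p : path (@bf_adj d) u p -> size p + lev u = lev (last u p) ->
  forall i, i <= size p -> lev (nth u (u :: p) i) = lev u + i /\
    (nth u (u :: p) i).2 = mix (lev u + i) (last u p).2 u.2.
Proof.
elim: p u => [|x p IH] u /=.
  move=> _ _ i; rewrite leqn0 => /eqP ->; rewrite addn0; split=> //.
  by apply/ffunP=> i0; rewrite mixE; case: ifP.
move=> /andP [hux hp] hs.
have [l1 l2] := lipschitz hp.
have [lx cx] : lev x = (lev u).+1 /\ forall i : 'I_d, val i != lev u -> x.2 i = u.2 i.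
  by case: (adj_cases hux) => [//|[e _]]; exfalso; slia.
have hs' : size p + lev x = lev (last x p) by slia.
have IHx := IH _ hp hs'.
case=> [|i] hi.
  split; first by rewrite addn0.
  apply/ffunP=> j; rewrite mixE addn0; case: ifP => // hj.
  have [_ e0] := IHx 0 (leq0n _).
  have hjx : j < lev x by rewrite lx ltnS ltnW.
  have := congr1 (fun f : code => f j) e0; rewrite /= mixE addn0 hjx => <-.
  by rewrite cx //; apply/eqP => e; rewrite e ltnn in hj.
have [e1 e2] := IHx i hi.
have en : nth u [:: u, x & p] i.+1 = nth x (x :: p) i.
  by rewrite /= (set_nth_default x).
rewrite en.
split; first by rewrite e1 lx; slia.
rewrite e2; apply/ffunP=> j; rewrite !mixE lx addSnnS; case: ifP => // hj.
by rewrite cx //; apply/eqP => e; move: hj; rewrite e; slia.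
Qed.

Lemma ml_down (u : V) p : path (@bf_adj d) u p -> size p + lev (last u p) = lev u ->
  forall i, i <= size p -> lev (nth u (u :: p) i) + i = lev u /\
    (nth u (u :: p) i).2 = mix (lev u - i) u.2 (last u p).2.
Proof.
elim: p u => [|x p IH] u /=.
  move=> _ _ i; rewrite leqn0 => /eqP ->; rewrite addn0 subn0; split=> //.
  by apply/ffunP=> i0; rewrite mixE; case: ifP.
move=> /andP [hux hp] hs.
have [l1 l2] := lipschitz hp.
have [lx cx] : lev u = (lev x).+1 /\ forall i : 'I_d, val i != lev x -> x.2 i = u.2 i.
  by case: (adj_cases hux) => [[e _]|//]; exfalso; slia.
have hs' : size p + lev (last x p) = lev x by slia.
have IHx := IH _ hp hs'.
case=> [|i] hi.
  split; first by rewrite addn0.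
  apply/ffunP=> j; rewrite mixE subn0; case: ifP => // hj.
  have [_ e0] := IHx 0 (leq0n _).
  have := congr1 (fun f : code => f j) e0; rewrite /= mixE subn0.
  have -> : (j < lev x) = false by apply/negbTE; rewrite -leqNgt; slia.
  move=> <-; rewrite cx //; apply/eqP => e; move: hj; rewrite lx e; slia.
have [e1 e2] := IHx i hi.
have en : nth u [:: u, x & p] i.+1 = nth x (x :: p) i.
  by rewrite /= (set_nth_default x).
rewrite en.
split; first by rewrite lx -e1; slia.
rewrite e2; apply/ffunP=> j; rewrite !mixE lx subSS; case: ifP => // hj.
by rewrite cx //; apply/eqP => e; move: hj; rewrite e; slia.
Qed.

Lemma walk_bit (u : V) p (b : 'I_d) : path (@bf_adj d) u p -> u.2 b != (last u p).2 b ->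
  (exists2 i, i <= size p & lev (nth u (u :: p) i) = b) /\
  (exists2 i, i <= size p & lev (nth u (u :: p) i) = b.+1).
Proof.
elim: p u => [|x p IH] u /=; first by rewrite eqxx.
move=> /andP [hux hp] hb.
case: (boolP (u.2 b == x.2 b)) => hux2.
  have hb2 : x.2 b != (last x p).2 b by rewrite -(eqP hux2).
  have [[i hi1 hi2] [j hj1 hj2]] := IH _ hp hb2.
  split; [exists i.+1|exists j.+1] => //=; by rewrite (set_nth_default x).
case: (adj_cases hux) => [[e c]|[e c]].
- have hb' : val b = lev u.
    by apply/eqP; apply: contraR hux2 => /c ->.
  by split; [exists 0|exists 1] => //=; rewrite ?e hb'.
- have hb' : val b = lev x.
    by apply/eqP; apply: contraR hux2 => /c ->.
  by split; [exists 1|exists 0] => //=; rewrite ?e hb'.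
Qed.


Lemma mk_lev (u : V) : mk (lev u) u.2 = u.
Proof. by case: u => a c; rewrite /mk levE /= inord_val. Qed.

Lemma belast_take (u : V) p : belast u p = take (size p) (u :: p).
Proof. by elim: p u => [|x p IH] u //=; rewrite IH. Qed.

Lemma mem_internal (u : V) p i : 0 < i -> i < size p -> nth u (u :: p) i \in internal u p.
Proof.
move=> h0 h1; rewrite /internal belast_take.
case: p h1 => [|x p] //= h1.
case: i h0 h1 => [|i] //= _ h1.
have -> : nth u (x :: p) i = nth u (take (size p) (x :: p)) i by rewrite nth_take.
by apply: mem_nth; rewrite size_take /=; case: ifP => _ //; slia.
Qed.

Lemma nth_take_cons (u : V) p i j : j <= i -> nth u (u :: take i p) j = nth u (u :: p) j.
Proof.
move=> h; have -> : u :: take i p = take i.+1 (u :: p) by [].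
by rewrite nth_take.
Qed.

Lemma last_take_cons (u : V) p i : i <= size p -> last u (take i p) = nth u (u :: p) i.
Proof.
move=> h; rewrite (last_nth u) size_take.
have -> : (if i < size p then i else size p) = i by case: ltngtP h.
by rewrite nth_take_cons.
Qed.

Lemma nth_drop_cons (u : V) p i j : i <= size p -> j <= size p - i ->
  nth (nth u (u :: p) i) (nth u (u :: p) i :: drop i p) j = nth u (u :: p) (i + j).
Proof.
move=> hi hj; case: j hj => [|j] hj; first by rewrite addn0.
rewrite /= nth_drop addnS /=; apply: set_nth_default; slia.
Qed.

Lemma vstruct (u : V) p k i : path (@bf_adj d) u p -> i <= size p ->
  lev (nth u (u :: p) i) = k -> k <= lev u -> k <= lev (last u p) ->
  size p <= (lev u - k) + (lev (last u p) - k) ->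
  [/\ i = lev u - k, size p = (lev u - k) + (lev (last u p) - k),
   (forall j, j <= i -> lev (nth u (u :: p) j) + j = lev u /\
        (nth u (u :: p) j).2 = mix (lev u - j) u.2 (nth u (u :: p) i).2) &
   (forall j, j <= size p - i -> lev (nth u (u :: p) (i + j)) = k + j /\
        (nth u (u :: p) (i + j)).2 = mix (k + j) (last u p).2 (nth u (u :: p) i).2)].
Proof.
move=> hp hi hk hku hkw hs.
set z := nth u (u :: p) i.
have hp12 := hp; rewrite -(cat_take_drop i p) cat_path in hp12.
case/andP: hp12; rewrite last_take_cons // -/z => hp1 hp2.
have hl2 : last z (drop i p) = last u p.
  by rewrite /z -(last_take_cons u hi) -last_cat cat_take_drop.
have hs1 : size (take i p) = i by rewrite size_take; case: ltngtP hi.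
have hs2 : size (drop i p) = size p - i by rewrite size_drop.
have [_ L1] := lipschitz hp1; rewrite last_take_cons // -/z hs1 in L1.
have [L2 _] := lipschitz hp2; rewrite hl2 hs2 in L2.
have hkz : lev z = k by [].
have ei : i = lev u - k by slia.
have es : size p = (lev u - k) + (lev (last u p) - k) by slia.
split => //.
- move=> j hj.
  have hd : size (take i p) + lev (last u (take i p)) = lev u.
    by rewrite hs1 last_take_cons // -/z; slia.
  have [e1 e2] := ml_down hp1 hd (i := j) ltac:(by rewrite hs1).
  by rewrite nth_take_cons // in e1 e2; rewrite e1 e2 last_take_cons.
- move=> j hj.
  have hu : size (drop i p) + lev z = lev (last z (drop i p)).
    by rewrite hs2 hl2; slia.
  have [e1 e2] := ml_up hp2 hu (i := j) ltac:(by rewrite hs2).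
  rewrite nth_drop_cons // in e1 e2.
  by rewrite e1 e2 hl2 hk.
Qed.

Lemma adj_mk j (c c' : code) : j < d -> (c' = c \/ c' = flip_bit c j) ->
  bf_adj (mk j c) (mk j.+1 c').
Proof.
move=> hj hc; apply/orP; left; rewrite /bf_up /mk /= !inordK //; last by slia.
rewrite eqxx /=; by case: hc => ->; rewrite eqxx ?orbT.
Qed.

Fixpoint uw (g : nat -> code) (t n : nat) : seq V :=
  if n is n'.+1 then mk t.+1 (g t.+1) :: uw g t.+1 n' else [::].

Lemma uw_walk g t n : t + n <= d ->
  (forall j, t <= j -> j < t + n -> g j.+1 = g j \/ g j.+1 = flip_bit (g j) j) ->
  [/\ path (@bf_adj d) (mk t (g t)) (uw g t n),
      last (mk t (g t)) (uw g t n) = mk (t + n) (g (t + n)) & size (uw g t n) = n].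
Proof.
elim: n t => [|n IH] t hd hg /=; first by rewrite addn0.
have [h1 h2 h3] := IH t.+1 ltac:(by slia) (fun j a b => hg j (ltnW a) ltac:(by slia)).
rewrite -addSnnS h2 h3; split=> //.
by rewrite h1 andbT; apply: adj_mk; [slia | apply: hg; slia].
Qed.

Fixpoint cd (c : code) (k n : nat) : seq V :=
  if n is n'.+1 then mk (k + n') c :: cd c k n' else [::].

Lemma cd_walk c k n : k + n <= d ->
  [/\ path (@bf_adj d) (mk (k + n) c) (cd c k n),
      last (mk (k + n) c) (cd c k n) = mk k c & size (cd c k n) = n].
Proof.
elim: n => [|n IH] hd /=; first by rewrite addn0.
have [h1 h2 h3] := IH ltac:(by slia).
rewrite h2 h3; split=> //.
by rewrite h1 andbT adj_sym addnS; apply: adj_mk; [slia | left].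
Qed.

Lemma mix_step (w c : code) j : j < d ->
  mix j.+1 w c = mix j w c \/ mix j.+1 w c = flip_bit (mix j w c) j.
Proof.
move=> hj; set o := Ordinal hj.
case: (boolP (w o == c o)) => ho; [left|right]; apply/ffunP => i;
  rewrite ?flipE !mixE ltnS; case: i => i hi /=;
  case: (ltngtP i j) => e //=; try by rewrite ?(ltn_eqF e) ?(gtn_eqF e).
all: have ei : Ordinal hi = o by apply: val_inj.
all: rewrite ei ?e ?eqxx; by move: ho; case: (w o); case: (c o).
Qed.

Lemma vwalk (u w : V) k : k <= lev u -> k <= lev w ->
  (forall i : 'I_d, i < k -> w.2 i = u.2 i) ->
  (forall i : 'I_d, lev w <= i -> w.2 i = u.2 i) ->
  exists q, [/\ path (@bf_adj d) u q, last u q = w & size q = (lev u - k) + (lev w - k)].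
Proof.
move=> hku hkw hlo hhi.
have hud := lev_le u; have hwd := lev_le w.
have [c1 c2 c3] := cd_walk u.2 (k := k) (n := lev u - k) ltac:(by slia).
pose g j := mix j w.2 u.2.
have hstep : forall j, k <= j -> j < k + (lev w - k) ->
    g j.+1 = g j \/ g j.+1 = flip_bit (g j) j.
  move=> j _ hj; apply: mix_step; move: hj hkw hwd; clear; slia.
have [u1 u2 u3] := uw_walk (g := g) (t := k) (n := lev w - k) ltac:(by slia) hstep.
have eu : mk (k + (lev u - k)) u.2 = u by rewrite subnKC // mk_lev.
have eg : g k = u.2 by apply/ffunP => i; rewrite mixE; case: ifP => // /hlo.
have ew : mk (k + (lev w - k)) (g (k + (lev w - k))) = w.
  rewrite subnKC // /g; rewrite -[in RHS](mk_lev w); congr mk.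
  by apply/ffunP => i; rewrite mixE; case: ifP => // /negbT; rewrite -leqNgt => /hhi.
rewrite eu in c1 c2; rewrite eg in u1 u2.
exists (cd u.2 k (lev u - k) ++ uw g k (lev w - k)); split.
- by rewrite cat_path c1 c2 u1.
- by rewrite last_cat c2 u2 ew.
- by rewrite size_cat c3 u3.
Qed.

End BF.

Ltac mixsolve := rewrite /= ?mixE; repeat (case: ltnP => ?); try (exfalso; slia); try done.


Section Count.
Variable d : nat.
Local Notation V := (bf_vertex d).
Local Notation code := {ffun 'I_d -> bool}.

Lemma gap1 n (S : {set 'I_n}) : (forall x y, x \in S -> y \in S -> x < y -> False) -> #|S| <= 1.
Proof.
move=> h; rewrite leqNgt; apply/negP => /card_gt1P [x [y [hx hy hxy]]].
case: (ltngtP x y) => e.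
- exact: h hx hy e.
- exact: h hy hx e.
- by move: hxy; rewrite (val_inj e) eqxx.
Qed.

Lemma gap2 n (S : {set 'I_n}) :
  (forall x y z, x \in S -> y \in S -> z \in S -> x < y -> y < z -> False) -> #|S| <= 2.
Proof.
move=> h; rewrite leqNgt; apply/negP => /card_gt2P [x [y [z [[hx hy hz] [hxy hyz hzx]]]]].
have nxy : val x != val y by [].
have nyz : val y != val z by [].
have nzx : val z != val x by [].
case: (ltngtP x y) => e1; case: (ltngtP y z) => e2; case: (ltngtP z x) => e3;
  rewrite ?e1 ?e2 ?e3 ?eqxx in nxy nyz nzx => //.
all: first [ exact: h hx hy hz e1 e2 | exact: h hz hy hx e2 e1 | exact: h hy hz hx e2 e3
           | exact: h hx hz hy e3 e2 | exact: h hz hx hy e3 e1 | exact: h hy hx hz e1 e3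
           | slia ].
Qed.

Lemma card_sumb n (P : pred 'I_n) : #|[set t | P t]| = \sum_t (P t : nat).
Proof.
rewrite cardsE -sum1_card big_mkcond /=; apply: eq_bigr => t _.
by rewrite unfold_in; case: (P t).
Qed.

Lemma deficit (g : code -> nat) a1 a2 : 0 < d -> (forall a, g a <= 2) -> a1 != a2 ->
  g a1 + g a2 <= 2 -> \sum_a g a <= 2 ^ d.+1 - 2.
Proof.
move=> hd hg h12 hs.
have e2 : \sum_(a : code) 2 = 2 ^ d.+1.
  by rewrite sum_nat_const cardT -cardE card_ffun card_bool card_ord expnS mulnC.
have split2 (f : code -> nat) : \sum_a f a = f a1 + f a2 + \sum_(a | (a != a1) && (a != a2)) f a.
  rewrite (bigD1 a1) //= (bigD1 a2) /=; last by rewrite eq_sym.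
  rewrite addnA; congr (_ + _ + _); apply: eq_bigl => a; by rewrite andbC.
have h4 : 4 <= 2 ^ d.+1.
  have : 2 ^ 2 <= 2 ^ d.+1 by rewrite leq_exp2l.
  by [].
rewrite split2.
have := split2 (fun _ => 2); rewrite e2 => e.
have : \sum_(a | (a != a1) && (a != a2)) g a <= \sum_(a | (a != a1) && (a != a2)) 2.
  by apply: leq_sum => a _.
slia.
Qed.

End Count.


Section Fam.
Variable d : nat.
Local Notation V := (bf_vertex d).
Local Notation code := {ffun 'I_d -> bool}.

Definition xorc (a m : code) : code := [ffun i => a i (+) m i].
Definition pv (m a : code) (t : 'I_d.+1) : V := (t, mix t (xorc a m) a).
Definition fcount (X : {set V}) m a := #|[set t : 'I_d.+1 | pv m a t \in X]|.

Lemma lev_pv m a t : lev (pv m a t) = t.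
Proof. by rewrite levE. Qed.

Lemma vert_eq (x y : V) : lev x = lev y -> x.2 = y.2 -> x = y.
Proof.
case: x => [x1 x2]; case: y => [y1 y2]; rewrite !levE /= => e1 ->.
by rewrite (val_inj e1).
Qed.

Lemma count_family (X : {set V}) m : #|X| = \sum_a fcount X m a.
Proof.
rewrite /fcount.
under eq_bigr => a _ do rewrite (@card_sumb d.+1 (fun t => pv m a t \in X)).
rewrite exchange_big /=.
have e1 : forall t : 'I_d.+1, \sum_(a : code) (pv m a t \in X : nat) = \sum_(c : code) ((t, c) \in X : nat).
  move=> t.
  have inv : involutive (fun a : code => mix t (xorc a m) a).
    move=> a; apply/ffunP => i; rewrite /mix /xorc !ffunE.
    by case: (i < t); case: (a i); case: (m i).
  rewrite (reindex_inj (inv_inj inv)) /=; apply: eq_bigr => a _.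
  by rewrite /pv inv.
under eq_bigr => t _ do rewrite e1.
rewrite pair_big /= -sum1_card big_mkcond /=; apply: eq_bigr => -[t c] _.
by case: ((t, c) \in X).
Qed.

Variable X : {set V}.
Hypothesis hX : mutual_visibility (@bf_adj d) X.

Lemma vis_path x y : x \in X -> y \in X -> exists p,
  [/\ path (@bf_adj d) x p, last x p = y,
      (forall q, path (@bf_adj d) x q -> last x q = y -> size p <= size q) &
      (forall i, 0 < i -> i < size p -> nth x (x :: p) i \notin X)].
Proof.
move=> hx hy; have [p [[[hp hl] hmin] hall]] := hX hx hy.
exists p; split=> //.
- by move=> q hq hlq; apply: hmin.
- by move=> i h0 h1; apply: (allP hall); apply: mem_internal.
Qed.

Lemma nomid m a (t1 t2 t3 : 'I_d.+1) : t1 < t2 -> t2 < t3 ->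
  pv m a t1 \in X -> pv m a t3 \in X -> pv m a t2 \notin X.
Proof.
move=> h12 h23 h1 h3.
have [p [hp hl hmin hint]] := vis_path h1 h3.
set u := pv m a t1; set w := pv m a t3.
have [q [hq1 hq2 hq3]] := vwalk (u := u) (w := w) (k := t1)
  ltac:(by rewrite lev_pv) ltac:(by rewrite lev_pv; slia)
  ltac:(by move=> i hi; mixsolve)
  ltac:(by move=> i; rewrite lev_pv => hi; mixsolve).
have hs := hmin q hq1 hq2.
rewrite hq3 !lev_pv in hs.
have [_ es _ H4] := vstruct (i := 0) (k := t1) hp (leq0n _)
  ltac:(by rewrite /= lev_pv) ltac:(by rewrite /= lev_pv)
  ltac:(by rewrite hl lev_pv; slia) ltac:(by rewrite hl !lev_pv).
rewrite hl !lev_pv in es H4.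
have [e1 e2] := H4 (t2 - t1) ltac:(by slia).
have ev : nth u (u :: p) (0 + (t2 - t1)) = pv m a t2.
  apply: vert_eq; first by rewrite e1 lev_pv; slia.
  rewrite e2 /= subnKC; last by slia.
  by apply/ffunP => i; mixsolve.
rewrite -ev; apply: hint; slia.
Qed.

Lemma fcount_le2 m a : fcount X m a <= 2.
Proof.
apply: gap2 => x y z; rewrite !inE => hx hy hz hxy hyz.
by move: (nomid hxy hyz hx hz); rewrite hy.
Qed.

End Fam.


Section Key.
Variable d : nat.
Local Notation V := (bf_vertex d).
Local Notation code := {ffun 'I_d -> bool}.

Definition zc : code := [ffun _ => false].

Lemma xorc_zero a : xorc a zc = a.
Proof. by apply/ffunP => i; rewrite /xorc !ffunE addbF. Qed.

Lemma xorcK (a c : code) : xorc a (xorc a c) = c.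
Proof. by apply/ffunP => i; rewrite /xorc !ffunE; case: (a i); case: (c i). Qed.

Lemma mix_same t (a : code) : mix t a a = a.
Proof. by apply/ffunP => i; rewrite /mix !ffunE; case: ifP. Qed.

Lemma pv_zero a t : pv zc a t = (t, a).
Proof. by rewrite /pv xorc_zero mix_same. Qed.

Lemma pv_xor (s c : code) t : pv (xorc s c) s t = (t, mix t c s).
Proof. by rewrite /pv xorcK. Qed.

Lemma three_card n (S : {set 'I_n}) x y z : x \in S -> y \in S -> z \in S ->
  x != y -> y != z -> z != x -> 2 < #|S|.
Proof. by move=> *; apply/card_gt2P; exists x, y, z. Qed.

Definition uptype (X : {set V}) (u : V) : Prop :=
  forall a : code, (forall i : 'I_d, lev u <= i -> a i = u.2 i) -> (ord0, a) \notin X.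
Definition downtype (X : {set V}) (u : V) : Prop :=
  forall b : code, (forall i : 'I_d, i < lev u -> b i = u.2 i) -> (ord_max, b) \notin X.
Definition rclean (X : {set V}) (l : nat) (c : code) : Prop :=
  forall (t : 'I_d.+1) (z : code), t < l -> (forall i : 'I_d, l <= i -> z i = c i) -> (t, z) \notin X.

Variable X : {set V}.
Hypothesis hX : mutual_visibility (@bf_adj d) X.
Hypothesis hd : 1 < d.

Lemma type_split u : u \in X -> 0 < lev u < d -> uptype X u \/ downtype X u.
Proof.
move=> hu /andP [h0 h1].
case: (classic (uptype X u)) => hup; [by left | right].
move=> b hb; apply/negP => hbX; apply: hup => a ha; apply/negP => haX.
set m := xorc a b.
have hlt : lev u < d.+1 by slia.
have := nomid hX (m := m) (a := a) (t1 := ord0) (t2 := Ordinal hlt) (t3 := ord_max) h0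
  ltac:(by rewrite /=; slia).
rewrite !pv_xor.
have -> : mix (ord0 : 'I_d.+1) b a = a by apply/ffunP => i; mixsolve.
have -> : mix (ord_max : 'I_d.+1) b a = b by apply/ffunP => i; rewrite mixE /= ltn_ord.
have -> : (Ordinal hlt, mix (Ordinal hlt) b a) = u.
  apply: vert_eq; first by rewrite levE.
  apply/ffunP => i; rewrite /= mixE; case: ltnP => hi; [exact: hb | exact: ha].
by move=> /(_ haX hbX); rewrite hu.
Qed.

Lemma min_up u : u \in X -> 0 < lev u < d -> uptype X u ->
  exists2 w, w \in X & [/\ 0 < lev w < d, uptype X w & rclean X (lev w) w.2].
Proof.
move: {2}(lev u) (leqnn (lev u)) => n; elim: n u => [|n IH] u hn hu hm hup.
  by move: hm; rewrite leqn0 in hn; rewrite (eqP hn).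
case: (classic (rclean X (lev u) u.2)) => hr; first by exists u.
have [t [z [ht hz hin]]] : exists (t : 'I_d.+1) (z : code), [/\ t < lev u, (forall i : 'I_d, lev u <= i -> z i = u.2 i) & (t, z) \in X].
  apply: NNPP => hn'; apply: hr => t z ht hz; apply/negP => hin; apply: hn'.
  by exists t, z.
have ht0 : 0 < t.
  rewrite lt0n; apply/negP => /eqP e.
  have et : t = ord0 by apply: val_inj.
  by move: (hup z hz); rewrite -et hin.
apply: (IH (t, z)) => //.
- by rewrite levE /=; slia.
- by rewrite levE /= ht0 /=; move: hm => /andP [_ ?]; slia.
- move=> a ha; apply: hup => i hi; rewrite ha; last by rewrite levE /=; slia.
  by apply: hz.
Qed.

Lemma rclean_ext l (c c' : code) : (forall i : 'I_d, l <= i -> c' i = c i) ->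
  rclean X l c -> rclean X l c'.
Proof. by move=> hc hr t z ht hz; apply: hr => // i hi; rewrite hz // hc. Qed.

Lemma col_contra u (m a : code) (t1 t2 : 'I_d.+1) : u \in X ->
  (forall i : 'I_d, lev u <= i -> a i = u.2 i) ->
  (exists i : 'I_d, (i < lev u) && (xorc a m i != u.2 i)) ->
  lev u <= t1 -> t1 < t2 -> pv m a t1 \in X -> pv m a t2 \in X -> False.
Proof.
move=> hu ha hne h1 h12 hx1 hx2.
set b := xorc a m; set c := u.2; set l := lev u.
case: hne => i0 hi0.
pose k := [arg min_(i < i0 | (i < l) && (b i != c i)) (i : nat)].
have [hk hkmin] : ((k < l) && (b k != c k)) /\
    forall i : 'I_d, (i < l) && (b i != c i) -> k <= i.
  rewrite /k; case: arg_minnP; first exact: hi0.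
  move=> j hj hjm; split; first exact: hj.
  exact: hjm.
case/andP: hk => hkl hbk.
have hlo : forall i : 'I_d, i < k -> b i = c i.
  move=> i hi; case: (boolP (b i == c i)) => [/eqP //|hne]; exfalso.
  have hil : i < l by slia.
  by have := hkmin i; rewrite hne andbT hil => /(_ isT); slia.
clearbody k.
set y := pv m a t2.
have [p [hp hl hmin hint]] := vis_path hX hu hx2.
have hyl : lev y = t2 by rewrite lev_pv.
have lo' : forall i : 'I_d, i < k -> y.2 i = u.2 i.
  move=> i hi; rewrite /y /= mixE.
  have -> : i < t2 by slia.
  exact: hlo.
have hi' : forall i : 'I_d, lev y <= i -> y.2 i = u.2 i.
  move=> i; rewrite hyl => hi; rewrite /y /= mixE.
  have -> : (i < t2) = false by slia.
  apply: ha; slia.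
have [q [hq1 hq2 hq3]] := vwalk (u := u) (w := y) (k := k) ltac:(by slia) ltac:(by rewrite hyl; slia) lo' hi'.
have hs := hmin q hq1 hq2; rewrite hq3 hyl in hs.
have hbit : u.2 k != (last u p).2 k.
  rewrite hl /y /= mixE.
  have -> : k < t2 by slia.
  by rewrite eq_sym.
have [[i hi hik] _] := walk_bit hp hbit.
have hk1 : k <= lev u by move: hkl; rewrite /l; clear; slia.
have hk2 : k <= lev (last u p).
  by rewrite hl lev_pv; move: hkl h1 h12; rewrite /l; clear; slia.
have hk3 : size p <= (lev u - k) + (lev (last u p) - k) by rewrite hl lev_pv.
have [ei es H3 H4] := vstruct hp hi hik hk1 hk2 hk3.
rewrite hl lev_pv in es H4.
set z := nth u (u :: p) i.
have hz : forall j : 'I_d, l <= j -> z.2 j = c j.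
  move=> j hj; have [_ e0] := H3 0 (leq0n _).
  have := congr1 (fun f : code => f j) e0; rewrite /= subn0 mixE.
  by have -> : (j < lev u) = false by move: hj; rewrite /l; clear; slia.
have ht1 : t1 - k <= size p - i by rewrite es ei; move: hkl h1 h12; rewrite /l; clear; slia.
have [e1 e2] := H4 (t1 - k) ht1.
have ev : nth u (u :: p) (i + (t1 - k)) = pv m a t1.
  apply: vert_eq.
    by rewrite e1 lev_pv; move: hkl h1 h12; rewrite /l; clear; slia.
  rewrite e2.
  have -> : k + (t1 - k) = t1 by move: hkl h1 h12; rewrite /l; clear; slia.
  apply/ffunP => j; rewrite /pv /= !mixE.
  case: ltnP => hj1.
    by have -> : j < t2 by move: hj1 h12; clear; slia.
  rewrite hz ?ha //.
    by move: hj1 h1; rewrite /l; clear; slia.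
  by move: hj1 h1; rewrite /l; clear; slia.
have hi0' : 0 < i + (t1 - k) by rewrite ei; move: hkl; rewrite /l; clear; slia.
have hi1' : i + (t1 - k) < size p by rewrite es ei; move: hkl h1 h12; rewrite /l; clear; slia.
by move: (hint _ hi0' hi1'); rewrite ev hx1.
Qed.

Lemma colL u (m a : code) : u \in X -> rclean X (lev u) u.2 ->
  (forall i : 'I_d, lev u <= i -> a i = u.2 i) ->
  (exists i : 'I_d, (i < lev u) && (xorc a m i != u.2 i)) ->
  fcount X m a <= 1.
Proof.
move=> hu hr ha hne; apply: gap1 => x y; rewrite !inE => hx hy hxy.
have hxl : lev u <= x.
  rewrite leqNgt; apply/negP => hlt.
  move: hx; rewrite /pv; apply/negP; apply: hr => // i hi.
  rewrite mixE; have -> : (i < x) = false by slia.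
  exact: ha.
exact: col_contra hu ha hne hxl hxy hx hy.
Qed.

End Key.

Arguments zc {d}.



Section KeyUp.
Variable d : nat.
Local Notation V := (bf_vertex d).
Local Notation code := {ffun 'I_d -> bool}.
Variable X : {set V}.
Hypothesis hX : mutual_visibility (@bf_adj d) X.
Hypothesis hd : 1 < d.

Lemma key_up u : u \in X -> 0 < lev u < d -> rclean X (lev u) u.2 ->
  exists m a1 a2, a1 != a2 /\ fcount X m a1 + fcount X m a2 <= 2.
Proof.
move=> hu /andP [hl0 hld] hr.
set c := u.2; set l := lev u.
have hd0 : 0 < d by move: hd; clear; slia.
pose b0 : 'I_d := Ordinal hd0.
pose b1 : 'I_d := Ordinal hd.
case: (leqP 2 l) => hl2.
- exists zc, (flip_bit c 0), (flip_bit c 1); split.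
    apply/negP => /eqP e; have := congr1 (fun f : code => f b0) e.
    by rewrite !flipE /=; case: (c b0).
  have h1 := @colL d X hX hd u zc (flip_bit c 0) hu hr.
  have h2 := @colL d X hX hd u zc (flip_bit c 1) hu hr.
  have := h1 ltac:(move=> i hi; rewrite flipE; case: eqP => // e; exfalso; move: hi hl2; rewrite -/l e; clear; slia)
           ltac:(exists b0; rewrite xorc_zero flipE /= -/l; apply/andP; split; [move: hl2; clear; slia | by case: (c b0)]).
  have := h2 ltac:(move=> i hi; rewrite flipE; case: eqP => // e; exfalso; move: hi hl2; rewrite -/l e; clear; slia)
           ltac:(exists b1; rewrite xorc_zero flipE /= -/l; apply/andP; split; [move: hl2; clear; slia | by case: (c b1)]).
  clear; slia.
have hl1 : l = 1 by move: hl0 hl2; rewrite -/l; clear; slia.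
set c' := flip_bit c 0.
have hQ' : forall i : 'I_d, l <= i -> c' i = c i.
  move=> i hi; rewrite flipE; case: eqP => // e; exfalso; move: hi hl1; rewrite e; clear; slia.
have hne' : c' b0 != c b0 by rewrite flipE /=; case: (c b0).
set u' : V := (u.1, c').
have hlu' : lev u' = l by rewrite /l !levE.
have hc'1 : fcount X zc c' <= 1.
  by apply: (colL hX hd hu hr hQ'); exists b0; rewrite xorc_zero hne' -/l hl1.
case: (boolP (u' \in X)) => hu'.
  have hc1 : fcount X zc c <= 1.
    apply: (colL hX hd hu').
    - by rewrite hlu'; apply: rclean_ext hr => i hi; rewrite hQ'.
    - by rewrite hlu' => i hi; rewrite hQ'.
    - by exists b0; rewrite xorc_zero /= eq_sym hne' hlu' hl1.
  exists zc, c, c'; split.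
    by apply/negP => /eqP e; move: hne'; rewrite -e eqxx.
  by move: hc1 hc'1; clear; slia.
case: (leqP (fcount X zc c) 1) => hc1.
  exists zc, c, c'; split.
    by apply/negP => /eqP e; move: hne'; rewrite -e eqxx.
  by move: hc1 hc'1; clear; slia.
case: (posnP (fcount X zc c')) => hc'0.
  exists zc, c, c'; split.
    by apply/negP => /eqP e; move: hne'; rewrite -e eqxx.
  by rewrite hc'0 addn0 fcount_le2.
have hu1 : val u.1 = 1 by rewrite -levE.
have [j hj hj1] : exists2 j : 'I_d.+1, (j, c) \in X & val j != 1.
  case/card_gt1P: hc1 => x [y [hx hy hxy]].
  rewrite !inE !pv_zero in hx hy.
  case: (boolP (val x == 1)) => hx1; last by exists x.
  exists y => //; apply: contra hxy => hy1.
  by apply/eqP/val_inj; rewrite (eqP hx1) (eqP hy1).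
have hj2 : 2 <= j.
  case: (posnP j) => hj0.
    by exfalso; move: hj; apply/negP; apply: hr => //; rewrite -/l hl1 hj0.
  by move: hj0 hj1; clear; slia.
case/card_gt0P: hc'0 => j' hj'; rewrite inE pv_zero in hj'.
have hj'2 : 2 <= j'.
  case: (posnP j') => hj0.
    by exfalso; move: hj'; apply/negP; apply: hr => //; rewrite -/l hl1 hj0.
  case: (eqVneq (val j') 1) => hj1'.
    have : (j', c') = u' by apply: vert_eq => //; rewrite hlu' levE hl1.
    by move=> e; move: hu'; rewrite -e hj'.
  by move: hj0 hj1'; clear; slia.
have hcol : forall t : 'I_d.+1, (t, c) \in X -> val t = 1 \/ t = j.
  move=> t ht; apply: NNPP => hn.
  have hS : 2 < fcount X zc c.
    apply: (@three_card _ _ u.1 j t); rewrite ?inE ?pv_zero //.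
    - by rewrite /c -surjective_pairing.
    - by apply/negP => /eqP e; move: hj1; rewrite -e hu1.
    - by apply/negP => /eqP e; apply: hn; right.
    - by apply/negP => /eqP e; apply: hn; left; rewrite e.
  by move: (fcount_le2 hX zc c) hS; clear; slia.
set y : V := (j, c); set y' : V := (j', c').
have [p [hp hl hmin hint]] := vis_path hX hj hj'.
have hly : lev y = j by rewrite levE.
have hly' : lev y' = j' by rewrite levE.
have [q [hq1 hq2 hq3]] := vwalk (u := y) (w := y') (k := 0) (leq0n _) (leq0n _)
  ltac:(by move=> i) ltac:(move=> i; rewrite hly' => hi; apply: hQ'; rewrite hl1; move: hi hj'2; clear; slia).
have hs := hmin q hq1 hq2; rewrite hq3 hly hly' !subn0 in hs.
have hbit : y.2 b0 != (last y p).2 b0 by rewrite hl /= eq_sym.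
have [[i hi hik] _] := walk_bit hp hbit.
have [ei es H3 _] := vstruct hp hi hik (leq0n _) (leq0n _) ltac:(by rewrite hl hly hly' !subn0).
rewrite hl hly hly' !subn0 in es ei H3.
rewrite -/y in H3.
set s := (nth y (y :: p) i).2.
have hsj : forall i0 : 'I_d, j <= i0 -> s i0 = c i0.
  move=> i0 hi0; have [_ e0] := H3 0 (leq0n _).
  have := congr1 (fun f : code => f i0) e0; rewrite /= subn0 mixE.
  by have -> : (i0 < j) = false by move: hi0; clear; slia.
have hmix : mix 1 c s != c.
  apply/negP => /eqP e.
  have [e1 e2] := H3 (j - 1) ltac:(by rewrite ei; clear; slia).
  have ev : nth y (y :: p) (j - 1) = u.
    apply: vert_eq; first by rewrite -/l hl1; move: e1 hj2; clear; slia.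
    by rewrite e2 /= (_ : j - (j - 1) = 1) ?e //; move: hj2; clear; slia.
  have h0 : 0 < j - 1 by move: hj2; clear; slia.
  have h1 : j - 1 < size p by rewrite es; move: hj2; clear; slia.
  by move: (hint _ h0 h1); rewrite ev hu.
have hsc : s != c by apply: contra hmix => /eqP ->; rewrite mix_same.
have hsc' : s != c'.
  apply: contra hmix => /eqP ->; apply/eqP/ffunP => i0; rewrite mixE.
  case: ltnP => // hi0; apply: hQ'; rewrite hl1; exact: hi0.
set m := xorc s c.
have aux : forall t : 'I_d.+1, pv m s t \in X -> val t = val j.
  move=> t; rewrite pv_xor => ht.
  case: (ltngtP t j) => htj //.
  - have [e1 e2] := H3 (j - t) ltac:(by rewrite ei; clear; slia).
    have ev : nth y (y :: p) (j - t) = (t, mix t c s).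
      apply: vert_eq; first by rewrite [in RHS]levE /=; move: e1 htj; clear; slia.
      by rewrite e2 /= (_ : j - (j - t) = t) //; move: htj; clear; slia.
    have h0 : 0 < j - t by move: htj; clear; slia.
    have h1 : j - t < size p by rewrite es; move: htj hj'2; clear; slia.
    by move: (hint _ h0 h1); rewrite ev ht.
  - have ec : mix t c s = c.
      apply/ffunP => i0; rewrite mixE; case: ltnP => // hi0.
      by apply: hsj; move: htj hi0; clear; slia.
    rewrite ec in ht; case: (hcol t ht) => [e|->] //.
    by exfalso; move: e htj hj2; clear; slia.
have hfs : fcount X m s <= 1.
  apply: gap1 => t1 t2; rewrite !inE => h1 h2 h12.
  by move: (aux _ h1) (aux _ h2) h12; clear; slia.
pose a := if s b0 != c b0 then c else c'.
have hfa : fcount X m a <= 1.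
  apply: (colL hX hd hu hr).
  - by move=> i0 hi0; rewrite /a; case: ifP => // _; apply: hQ'.
  - exists b0; rewrite -/l hl1 /=; rewrite /a /m.
    case: ifP => hb; rewrite /xorc !ffunE.
    + by move: hb; case: (s b0); case: (c b0).
    + by move: hb; rewrite /= -/c; case: (s b0); case: (c b0).
exists m, s, a; split.
  by rewrite /a; case: ifP.
by move: hfs hfa; clear; slia.
Qed.

End KeyUp.


Section NoMid.
Variable d : nat.
Local Notation V := (bf_vertex d).
Local Notation code := {ffun 'I_d -> bool}.
Local Notation o0 := (ord0 : 'I_d.+1).
Local Notation om := (ord_max : 'I_d.+1).
Variable X : {set V}.
Hypothesis hX : mutual_visibility (@bf_adj d) X.
Hypothesis hd : 1 < d.

Lemma pair_top (a : code) : (o0, a) \in X -> (o0, flip_bit a d.-1) \in X ->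
  exists b, (om, b) \notin X.
Proof.
move=> h1 h2; have [p [hp hl hmin hint]] := vis_path hX h1 h2.
have hdd : d.-1 < d by move: hd; clear; slia.
pose bd : 'I_d := Ordinal hdd.
have hb : (o0, a).2 bd != (last (o0, a) p).2 bd by rewrite hl /= flipE /= ?eqxx; case: (a bd).
have [_ [i hi hil]] := walk_bit hp hb.
have hv : nth (o0, a) ((o0, a) :: p) i = (om, (nth (o0, a) ((o0, a) :: p) i).2).
  apply: vert_eq => //; rewrite hil levE /=; move: hd; clear; slia.
exists (nth (o0, a) ((o0, a) :: p) i).2; rewrite -hv; apply: hint.
- case: (posnP i) => // e; move: hil; rewrite e /= levE /=; move: hd; clear; slia.
- rewrite ltn_neqAle hi andbT; apply/negP => /eqP e.
  move: hil; rewrite e -last_nth hl levE /=; move: hd; clear; slia.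
Qed.

Lemma pair_bot (b : code) : (om, b) \in X -> (om, flip_bit b 0) \in X ->
  exists a, (o0, a) \notin X.
Proof.
move=> h1 h2; have [p [hp hl hmin hint]] := vis_path hX h1 h2.
have hd0 : 0 < d by move: hd; clear; slia.
pose b0 : 'I_d := Ordinal hd0.
have hb : (om, b).2 b0 != (last (om, b) p).2 b0 by rewrite hl /= flipE /= ?eqxx; case: (b b0).
have [[i hi hil] _] := walk_bit hp hb.
have hv : nth (om, b) ((om, b) :: p) i = (o0, (nth (om, b) ((om, b) :: p) i).2).
  apply: vert_eq => //; rewrite hil levE /=; move: hd; clear; slia.
exists (nth (om, b) ((om, b) :: p) i).2; rewrite -hv; apply: hint.
- case: (posnP i) => // e; move: hil; rewrite e /= levE /=; move: hd; clear; slia.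
- rewrite ltn_neqAle hi andbT; apply/negP => /eqP e.
  move: hil; rewrite e -last_nth hl levE /=; move: hd; clear; slia.
Qed.

Lemma col_le1 (c : code) (t0 : 'I_d.+1) :
  (forall t : 'I_d.+1, (t, c) \in X -> t = t0) -> fcount X zc c <= 1.
Proof.
move=> h; apply: gap1 => x y; rewrite !inE !pv_zero => hx hy hxy.
by move: hxy; rewrite (h _ hx) (h _ hy) ltnn.
Qed.

Lemma key_nomid : (forall z, z \in X -> lev z = 0 \/ lev z = d) ->
  exists m a1 a2, a1 != a2 /\ fcount X m a1 + fcount X m a2 <= 2.
Proof.
move=> hz.
have hd0 : 0 < d by move: hd; clear; slia.
pose b0 : 'I_d := Ordinal hd0.
pose b1 : 'I_d := Ordinal hd.
have hdd : d.-1 < d by move: hd; clear; slia.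
pose bd : 'I_d := Ordinal hdd.
have lv0 : forall t : 'I_d.+1, val t = 0 -> t = o0 by move=> t e; apply: val_inj.
have lvd : forall t : 'I_d.+1, val t = d -> t = om by move=> t e; apply: val_inj.
have hlev : forall (t : 'I_d.+1) c, (t, c) \in X -> t = o0 \/ t = om.
  by move=> t c /hz; rewrite levE /= => -[/lv0|/lvd] ->; [left|right].
case: (classic (exists a : code, (o0, a) \notin X)) => [[a1 ha1]|hA];
  case: (classic (exists b : code, (om, b) \notin X)) => [[b hb]|hB].
- set m := xorc a1 b.
  exists m, a1, (flip_bit a1 0); split.
    apply/negP => /eqP e; have := congr1 (fun f : code => f b0) e.
    by rewrite flipE /=; case: (a1 b0).
  have -> : fcount X m a1 = 0.
    apply/eqP; rewrite cards_eq0; apply/eqP/setP => t; rewrite !inE pv_xor.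
    apply/negP => ht; case: (hlev _ _ ht) => et; move: ht; rewrite et.
    + have -> : mix o0 b a1 = a1 by apply/ffunP => i; rewrite mixE.
      by apply/negP.
    + have -> : mix om b a1 = b by apply/ffunP => i; rewrite mixE /= ltn_ord.
      by apply/negP.
  by rewrite add0n fcount_le2.
-
  have hnb : forall b : code, (om, b) \in X by move=> b; apply: NNPP => hn; apply: hB; exists b; apply/negP.
  have pick : forall c : code, exists2 c' : code, (c' = c \/ c' = flip_bit c d.-1) & (o0, c') \notin X.
    move=> c; case: (boolP ((o0, c) \in X)) => hc; last by exists c; [left|].
    case: (boolP ((o0, flip_bit c d.-1) \in X)) => hc'; last by exists (flip_bit c d.-1); [right|].
    have [b hb] := pair_top hc hc'; by move: hb; rewrite hnb.
  have [c1 hc1 hc1X] := pick zc.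
  have [c2 hc2 hc2X] := pick (flip_bit zc 0).
  have h0d : (0 == d.-1) = false by apply: negbTE; move: hd; clear; slia.
  exists zc, c1, c2; split.
    apply/negP => /eqP e; have := congr1 (fun f : code => f b0) e.
    by case: hc1 => ->; case: hc2 => ->; rewrite ?flipE /= ?ffunE /= ?h0d.
  have f1 : forall c : code, (o0, c) \notin X -> fcount X zc c <= 1.
    move=> c hc; apply: (@col_le1 c om) => t ht.
    by case: (hlev _ _ ht) => // e; move: ht hc; rewrite e => ->.
  by move: (f1 _ hc1X) (f1 _ hc2X); clear; slia.
-
  have hna : forall a : code, (o0, a) \in X by move=> a; apply: NNPP => hn; apply: hA; exists a; apply/negP.
  have pick : forall c : code, exists2 c' : code, (c' = c \/ c' = flip_bit c 0) & (om, c') \notin X.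
    move=> c; case: (boolP ((om, c) \in X)) => hc; last by exists c; [left|].
    case: (boolP ((om, flip_bit c 0) \in X)) => hc'; last by exists (flip_bit c 0); [right|].
    have [a ha] := pair_bot hc hc'; by move: ha; rewrite hna.
  have [c1 hc1 hc1X] := pick zc.
  have [c2 hc2 hc2X] := pick (flip_bit zc 1).
  exists zc, c1, c2; split.
    apply/negP => /eqP e; have := congr1 (fun f : code => f b1) e.
    by case: hc1 => ->; case: hc2 => ->; rewrite ?flipE /= ?ffunE /=.
  have f1 : forall c : code, (om, c) \notin X -> fcount X zc c <= 1.
    move=> c hc; apply: (@col_le1 c o0) => t ht.
    by case: (hlev _ _ ht) => // e; move: ht hc; rewrite e => ->.
  by move: (f1 _ hc1X) (f1 _ hc2X); clear; slia.
- exfalso.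
  have hna : forall a : code, (o0, a) \in X by move=> a; apply: NNPP => hn; apply: hA; exists a; apply/negP.
  have hnb : forall b : code, (om, b) \in X by move=> b; apply: NNPP => hn; apply: hB; exists b; apply/negP.
  have [b hb] := pair_top (hna zc) (hna (flip_bit zc d.-1)).
  by move: hb; rewrite hnb.
Qed.

End NoMid.


Section Rho.
Variable d : nat.
Local Notation V := (bf_vertex d).
Local Notation code := {ffun 'I_d -> bool}.

Definition rvc (c : code) : code := [ffun i => c (rev_ord i)].
Definition rho (u : V) : V := (rev_ord u.1, rvc u.2).

Lemma rvcK : involutive rvc.
Proof. by move=> c; apply/ffunP => i; rewrite !ffunE rev_ordK. Qed.

Lemma rhoK : involutive rho.
Proof. by case=> a c; rewrite /rho /= rev_ordK rvcK. Qed.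

Lemma rho_inj : injective rho.
Proof. exact: inv_inj rhoK. Qed.

Lemma lev_rho u : lev (rho u) = d - lev u.
Proof. by rewrite !levE /=; rewrite subSS. Qed.

Lemma flip_bitK (c : code) k : flip_bit (flip_bit c k) k = c.
Proof. by apply/ffunP => i; rewrite !flipE; case: eqP => // _; rewrite negbK. Qed.

Lemma rvc_flip (c : code) k : k < d -> rvc (flip_bit c k) = flip_bit (rvc c) (d.-1 - k).
Proof.
move=> hk; apply/ffunP => i; rewrite !ffunE /=.
have -> : (d - i.+1 == k) = (val i == d.-1 - k).
  case: i => n hn /=.
  case: (eqVneq (d - n.+1) k) => e; case: (eqVneq n (d.-1 - k)) => e' //; exfalso; move: e e' hn hk; clear; slia.
by [].
Qed.

Lemma flip_eq_sym (u v : code) k : (v == flip_bit u k) = (u == flip_bit v k).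
Proof.
apply/eqP/eqP => ->; by rewrite flip_bitK.
Qed.

Lemma up_rho (u v : V) : bf_up (rho u) (rho v) = bf_up v u.
Proof.
rewrite /bf_up /= !subSS.
have hu := ltn_ord u.1; have hv := ltn_ord v.1.
case: (eqVneq (val v.1).+1 (val u.1)) => e /=.
- have -> : (d - u.1).+1 == d - v.1 by apply/eqP; move: e hu hv; clear; slia.
  have -> : d - u.1 = d.-1 - v.1 by move: e hu hv; clear; slia.
  rewrite -rvc_flip; last by move: e hu hv; clear; slia.
  rewrite !(inj_eq (inv_inj rvcK)) eq_sym flip_eq_sym.
  by [].
- have -> : ((d - u.1).+1 == d - v.1) = false.
    by apply/negbTE/eqP => e'; move: e; rewrite eqE /=; move: e' hu hv; clear; slia.
  by [].
Qed.

Lemma adj_rho (u v : V) : bf_adj (rho u) (rho v) = bf_adj u v.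
Proof. by rewrite /bf_adj !up_rho orbC. Qed.

Lemma mv_rho (X : {set V}) : mutual_visibility (@bf_adj d) X ->
  mutual_visibility (@bf_adj d) (rho @: X).
Proof.
move=> hX x y /imsetP [x0 hx0 ->] /imsetP [y0 hy0 ->].
have [p [[[hp hl] hmin] hall]] := hX x0 y0 hx0 hy0.
have erel : relpre rho (@bf_adj d) =2 (@bf_adj d) by move=> a b; rewrite /relpre /= adj_rho.
exists (map rho p); split; first split; first split.
- by rewrite path_map (eq_path erel).
- by rewrite last_map hl.
- move=> q [hq hlq].
  have hw : walk (@bf_adj d) x0 y0 (map rho q).
    split.
    + by rewrite -[x0]rhoK path_map (eq_path erel).
    + by rewrite -[x0]rhoK last_map hlq rhoK.
  by move: (hmin _ hw); rewrite !size_map.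
- rewrite /internal belast_map behead_map all_map.
  apply/allP => z hz /=; rewrite (mem_imset _ _ rho_inj).
  exact: (allP hall).
Qed.

Lemma down_up (X : {set V}) u : downtype X u -> uptype (rho @: X) (rho u).
Proof.
move=> hdn a ha.
have e : ((ord0 : 'I_d.+1), a) = rho (ord_max, rvc a).
  rewrite /rho /= rvcK; congr pair; apply: val_inj => /=; by rewrite subnn.
rewrite e (mem_imset _ _ rho_inj); apply: hdn => i hi.
rewrite /rvc ffunE ha; last first.
  rewrite lev_rho /=; have := lev_le u; move: hi; clear; slia.
by rewrite /rho /= ffunE rev_ordK.
Qed.

End Rho.

Section Final.
Variable d : nat.
Hypothesis hd : 1 < d.
Local Notation V := (bf_vertex d).

Lemma bound_of (Y : {set V}) : mutual_visibility (@bf_adj d) Y ->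
  (exists m a1 a2, a1 != a2 /\ fcount Y m a1 + fcount Y m a2 <= 2) -> #|Y| <= 2 ^ d.+1 - 2.
Proof.
move=> hY [m [a1 [a2 [h12 hs]]]].
rewrite (count_family Y m); apply: (deficit (a1 := a1) (a2 := a2)) => //.
- by move: hd; clear; slia.
- by move=> a; apply: fcount_le2.
Qed.

Lemma up_bound (Y : {set V}) : mutual_visibility (@bf_adj d) Y ->
  (exists u, [/\ u \in Y, 0 < lev u < d & uptype Y u]) -> #|Y| <= 2 ^ d.+1 - 2.
Proof.
move=> hY [u [hu hm hup]].
have [w hw [hwm _ hwr]] := min_up hd hu hm hup.
apply: (bound_of hY); exact: (key_up hY hd hw hwm hwr).
Qed.

End Final.

Theorem lemma5p3 (d : nat) (hd : 2 <= d) (X : {set bf_vertex d}) :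
  mutual_visibility (@bf_adj d) X -> #|X| <= 2 ^ d.+1 - 2.
Proof.
move=> hX.
case: (classic (exists u, u \in X /\ 0 < lev u < d)) => [[u [hu hm]]|hn].
- case: (type_split hX hd hu hm) => [hup|hdn].
  + by apply: (up_bound hd hX); exists u.
  + rewrite -(card_imset X (@rho_inj d)).
    apply: (up_bound hd (mv_rho hX)); exists (rho u); split.
    * by rewrite (mem_imset _ _ (@rho_inj d)).
    * rewrite lev_rho; move: hm; have := lev_le u; clear; slia.
    * exact: down_up.
- apply: (bound_of hd hX); apply: (key_nomid hX hd) => z hz.
  case: (posnP (lev z)) => h0; first by left.
  right; case: (ltnP (lev z) d) => hlt.
    by exfalso; apply: hn; exists z; rewrite hz h0 hlt.
  by apply/eqP; rewrite eqn_leq lev_le.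
Qed.
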